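(* Let $(\Omega,\Sigma,\mu)$ be a finite measure space and let $X(\mu)\subseteq L^0(\mu)$ be a Banach space of measurable functions. Then there is an equivalent norm on $X(\mu)$ under which $X(\mu)$ is a Banach function space if and only if $X(\mu)$ is a Banach rectangular function space with the subsequence property.
   Context: $L^0(\mu)$ is the space of equivalence classes (modulo $\mu$-a.e. equality) of real $\Sigma$-measurable functions. A Banach space of measurable functions is a vector subspace of $L^0(\mu)$ with a complete norm. It is rectangular if for some $C>0$, $\chi_Af\in X(\mu)$ and $\|\chi_Af\|\le C\|f\|$ for all $f\in X(\mu)$, $A\in\Sigma$. Subsequence property: whenever $f_n,f\in X(\mu)$ and $f_n\to f$ in norm, some subsequence converges to $f$ $\mu$-a.e. A Banach function space is such a space which is an ideal of $L^0(\mu)$ (if $f\in L^0(\mu)$, $g\in X(\mu)$, $|f|\le|g|$, then $f\in X(\mu)$) and whose norm satisfies $\|f\|\le\|g\|$ whenever $|f|\le|g|$. *)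

(* Defs.v *)
From HB Require Import structures.
From mathcomp Require Import all_boot all_order all_algebra.
From mathcomp Require Import all_classical all_reals all_analysis.
Set Implicit Arguments. Unset Strict Implicit. Unset Printing Implicit Defensive.
Import Order.TTheory GRing.Theory Num.Theory.
Import numFieldNormedType.Exports.
Local Open Scope classical_set_scope.
Local Open Scope ring_scope.

(* An element of L^0(mu) (a class of measurable functions modulo a.e.
   equality) is represented by any of its measurable representatives.
   A vector subspace X of L^0(mu) is represented by the set S of all
   measurable representatives of its elements (so S is saturated under
   a.e. equality), and a norm on X by a function N : (T -> R) -> R which
   is invariant under a.e. equality on S (its values outside S are
   irrelevant). *)

Section BanachMeasurable.
Context d (T : measurableType d) (R : realType) (mu : {measure set T -> \bar R}).

Definition L0_subspace (S : set (T -> R)) : Prop :=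
  [/\ (forall f, S f -> measurable_fun [set: T] f),
      (forall f g, S f -> measurable_fun [set: T] g -> f = g %[ae mu] -> S g),
      S (fun=> 0),
      (forall f g, S f -> S g -> S (fun x => f x + g x)) &
      (forall (a : R) f, S f -> S (fun x => a * f x))].

Definition norm_on (S : set (T -> R)) (N : (T -> R) -> R) : Prop :=
  [/\ (forall f g, S f -> S g -> f = g %[ae mu] -> N f = N g),
      (forall f, S f -> (N f = 0 <-> f = (fun=> 0) %[ae mu])),
      (forall f g, S f -> S g -> N (fun x => f x + g x) <= N f + N g) &
      (forall (a : R) f, S f -> N (fun x => a * f x) = `|a| * N f)].

Definition complete_on (S : set (T -> R)) (N : (T -> R) -> R) : Prop :=
  forall u : nat -> T -> R, (forall n, S (u n)) ->
    (forall e : R, 0 < e -> exists M : nat, forall m n : nat,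
        (M <= m)%N -> (M <= n)%N -> N (fun x => u m x - u n x) < e) ->
    exists2 f, S f & (N (fun x => u n x - f x)) @[n --> \oo] --> (0 : R).

Definition banach_meas_space (S : set (T -> R)) (N : (T -> R) -> R) : Prop :=
  [/\ L0_subspace S, norm_on S N & complete_on S N].

Definition L0_ideal (S : set (T -> R)) : Prop :=
  forall f g : T -> R, measurable_fun [set: T] f -> S g ->
    {ae mu, forall x, `|f x| <= `|g x|} -> S f.

Definition lattice_norm (S : set (T -> R)) (N : (T -> R) -> R) : Prop :=
  forall f g, S f -> S g -> {ae mu, forall x, `|f x| <= `|g x|} -> N f <= N g.

Definition banach_function_space (S : set (T -> R)) (N : (T -> R) -> R) : Prop :=
  [/\ banach_meas_space S N, L0_ideal S & lattice_norm S N].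

Definition rectangular (S : set (T -> R)) (N : (T -> R) -> R) : Prop :=
  exists C : R, 0 < C /\
    forall f (A : set T), S f -> measurable A ->
      S (fun x => \1_A x * f x) /\ N (fun x => \1_A x * f x) <= C * N f.

Definition subsequence_property (S : set (T -> R)) (N : (T -> R) -> R) : Prop :=
  forall (u : nat -> T -> R) (f : T -> R), (forall n, S (u n)) -> S f ->
    (N (fun x => u n x - f x)) @[n --> \oo] --> (0 : R) ->
    exists phi : nat -> nat, {homo phi : m n / (m < n)%N >-> (m < n)%N} /\
      {ae mu, forall x, (u (phi n) x) @[n --> \oo] --> f x}.

Definition equivalent_norms (S : set (T -> R)) (N N' : (T -> R) -> R) : Prop :=
  exists c C : R, [/\ 0 < c, 0 < C &
    forall f, S f -> c * N f <= N' f /\ N' f <= C * N f].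

End BanachMeasurable.

(* Main.v *)
Require Import Defs.
From HB Require Import structures.
From mathcomp Require Import all_boot all_order all_algebra.
From mathcomp Require Import all_classical all_reals all_analysis.
From mathcomp Require Import lra ring.
Import Order.TTheory GRing.Theory Num.Theory.
Import numFieldNormedType.Exports.
Local Open Scope classical_set_scope.
Local Open Scope ring_scope.
Local Notation measurable_funM := measurable_realfun.measurable_funM.
Local Notation measurable_funB := measurable_realfun.measurable_funB.
Local Notation measurable_funD := measurable_realfun.measurable_funD.
Local Notation normr_measurable := measurable_realfun.normr_measurable.
Local Notation measurable_indic := measurable_realfun.measurable_indic.
Local Notation measurable_maxr := measurable_realfun.measurable_maxr.
Local Notation measurable_minr := measurable_realfun.measurable_minr.


Section Gen.
Context (R : realType).

Lemma cvg0_ev {a : nat -> R} : a n @[n --> \oo] --> 0 ->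
  forall e, 0 < e -> exists M, forall n, (M <= n)%N -> `|a n| < e.
Proof.
move=> /cvgrPdist_lt H e e0; have [M _ HM] := H e e0.
by exists M => n Mn; have := HM n Mn; rewrite sub0r normrN.
Qed.

Lemma ev_cvg0 (a : nat -> R) :
  (forall e, 0 < e -> exists M, forall n, (M <= n)%N -> `|a n| < e) ->
  a n @[n --> \oo] --> 0.
Proof.
move=> H; apply/cvgrPdist_lt => e e0; have [M HM] := H e e0.
by exists M => // n /= Mn; rewrite sub0r normrN; exact: HM.
Qed.

Definition w (n : nat) : R := (2^-1) ^+ n.

Lemma w_ge0 n : 0 <= w n.
Proof. by rewrite /w exprn_ge0 // invr_ge0. Qed.

Lemma wS n : w n = 2 * w n.+1.
Proof. by rewrite /w exprS mulrA divff ?mul1r // pnatr_eq0. Qed.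

Lemma w_anti m n : (m <= n)%N -> w n <= w m.
Proof.
move=> mn; rewrite /w; apply: ler_wiXn2l; last by [].
  by rewrite invr_ge0.
by rewrite invf_le1 // ler1n.
Qed.

Lemma w_small e : 0 < e -> exists M, forall n, (M <= n)%N -> w n < e.
Proof.
move=> e0; have H : (w n) @[n --> \oo] --> (0:R).
  by apply: cvg_expr; rewrite gtr0_norm ?invr_gt0 // invf_lt1 // ltr1n.
have [M HM] := cvg0_ev H e e0; exists M => n /HM.
by rewrite ger0_norm // w_ge0.
Qed.

Lemma le_of_cvg0 (a b : R) (c : nat -> R) :
  (forall n, a <= b + c n) -> c n @[n --> \oo] --> 0 -> a <= b.
Proof.
move=> H /cvg0_ev Hc; apply/ler_addgt0Pr => e e0.
have [M HM] := Hc e e0; apply: (le_trans (H M)); rewrite lerD2l.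
by apply: (le_trans (ler_norm _)); apply/ltW/HM.
Qed.

End Gen.

Lemma lim_uniq {R : realType} {a : nat -> R} {l1 l2 : R} :
  a n @[n --> \oo] --> l1 -> a n @[n --> \oo] --> l2 -> l1 = l2.
Proof. move=> H1 H2; exact: (cvg_unique _ H1 H2). Qed.

Lemma inc_ge (phi : nat -> nat) : {homo phi : m n / (m < n)%N >-> (m < n)%N} ->
  forall n, (n <= phi n)%N.
Proof.
move=> Hp; elim=> // n IH; apply: leq_ltn_trans IH _; exact: Hp.
Qed.

Lemma alg1 (R : realType) (r g : R) : `|r| <= `|g| -> 0 <= r * g -> `|2 * r - g| <= `|g|.
Proof.
move=> H1 H2; rewrite ler_norml; move: H1.
case: (lerP 0 g) => g0; case: (lerP 0 r) => r0;
  rewrite ?(ger0_norm g0) ?(ltr0_norm g0) ?(ger0_norm r0) ?(ltr0_norm r0) => H1;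
  apply/andP; split; nra.
Qed.

Lemma alg2 (R : realType) (r g : R) : `|r| <= `|g| -> r * g < 0 -> `|2 * r + g| <= `|g|.
Proof.
move=> H1 H2; rewrite ler_norml; move: H1.
case: (lerP 0 g) => g0; case: (lerP 0 r) => r0;
  rewrite ?(ger0_norm g0) ?(ltr0_norm g0) ?(ger0_norm r0) ?(ltr0_norm r0) => H1;
  apply/andP; split; nra.
Qed.

Lemma alg3 (R : realType) (k a b : R) : `|k| <= `|a + b| ->
  `|k - Num.max (- `|a|) (Num.min `|a| k)| <= `|b|.
Proof.
move=> H; have := ler_normD a b => H2.
have /andP[h2 h3] : - `|k| <= k <= `|k| by rewrite -ler_norml.
have := normr_ge0 a; have := normr_ge0 b => hb ha.
rewrite minEle; case: (lerP `|a| k) => h1; rewrite maxEle.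
  case: (lerP (- `|a|) `|a|) => h4; rewrite ler_norml; apply/andP; split; lra.
case: (lerP (- `|a|) k) => h4; rewrite ler_norml; apply/andP; split; lra.
Qed.

Lemma le_of_cvg0' (R : realType) (a b : R) (c : nat -> R) (M : nat) :
  (forall n, (M <= n)%N -> a <= b + c n) -> c n @[n --> \oo] --> 0 -> a <= b.
Proof.
move=> H /cvg0_ev Hc; apply/ler_addgt0Pr => e e0.
have [M' HM] := Hc e e0; apply: (le_trans (H (maxn M M') (leq_maxl _ _))).
rewrite lerD2l; apply: (le_trans (ler_norm _)); apply/ltW/HM; exact: leq_maxr.
Qed.

Lemma w_gt0 (R : realType) n : 0 < w R n.
Proof. by rewrite /w exprn_gt0 // invr_gt0. Qed.


Section Basics.
Context {d} {T : measurableType d} {R : realType} {mu : {measure set T -> \bar R}}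
  {S : set (T -> R)} {N : (T -> R) -> R}.
Hypotheses (HS : L0_subspace mu S) (HN : norm_on mu S N).

Lemma S_meas {f} : S f -> measurable_fun setT f.
Proof. by case: HS => H *; exact: H. Qed.
Lemma S_ae {f g} : S f -> measurable_fun setT g -> f = g %[ae mu] -> S g.
Proof. by case: HS => _ H _ _ _ Sf mg fg; exact: (H f g). Qed.
Lemma S_0 : S (fun=> 0).
Proof. by case: HS. Qed.
Lemma S_D {f g} : S f -> S g -> S (fun x => f x + g x).
Proof. by case: HS => _ _ _ H *; exact: H. Qed.
Lemma S_Z a {f} : S f -> S (fun x => a * f x).
Proof. by case: HS => _ _ _ _ H *; exact: H. Qed.
Lemma S_N {f} : S f -> S (fun x => - f x).
Proof.
move=> Sf; have := S_Z (-1) Sf.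
by have -> : (fun x => -1 * f x) = (fun x => - f x) by apply/funext => x; rewrite mulN1r.
Qed.
Lemma S_B {f g} : S f -> S g -> S (fun x => f x - g x).
Proof. by move=> Sf Sg; apply: S_D => //; exact: S_N. Qed.
Lemma S_ext {f g} : S f -> (forall x, f x = g x) -> S g.
Proof. by move=> Sf fg; have <- : f = g by apply/funext. Qed.

Lemma N_ae {f g} : S f -> S g -> f = g %[ae mu] -> N f = N g.
Proof. by case: HN => H *; exact: H. Qed.
Lemma N_eq0 {f} : S f -> (N f = 0 <-> f = (fun=> 0) %[ae mu]).
Proof. by case: HN => _ H *; exact: H. Qed.
Lemma N_D {f g} : S f -> S g -> N (fun x => f x + g x) <= N f + N g.
Proof. by case: HN => _ _ H *; exact: H. Qed.
Lemma N_Z a {f} : S f -> N (fun x => a * f x) = `|a| * N f.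
Proof. by case: HN => _ _ _ H *; exact: H. Qed.
Lemma N_ext f g : (forall x, f x = g x) -> N f = N g.
Proof. by move=> fg; have <- : f = g by apply/funext. Qed.

Lemma N_zero : N (fun=> 0) = 0.
Proof.
have H := N_Z 0 S_0; rewrite normr0 [0 * N _]mul0r in H; rewrite -[RHS]H.
by apply: N_ext => x; rewrite mul0r.
Qed.

Lemma N_ge0 {f} : S f -> 0 <= N f.
Proof.
move=> Sf; have := N_D Sf (S_Z (-1) Sf); rewrite N_Z // normrN normr1 mul1r.
rewrite (@N_ext _ (fun=> 0)) ?N_zero; first by move=> H; lra.
by move=> x; rewrite mulN1r subrr.
Qed.

Lemma N_opp {f} : S f -> N (fun x => - f x) = N f.
Proof.
move=> Sf; rewrite -[RHS]mul1r -[1 in RHS]normr1 -(normrN (1:R)) -N_Z //.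
by apply: N_ext => x; rewrite mulN1r.
Qed.

Lemma N_subC {f g} : S f -> S g -> N (fun x => f x - g x) = N (fun x => g x - f x).
Proof.
move=> Sf Sg; rewrite -N_opp; last exact: S_B.
by apply: N_ext => x; rewrite opprB.
Qed.

Lemma N_tri {f g h} : S f -> S g -> S h ->
  N (fun x => f x - h x) <= N (fun x => f x - g x) + N (fun x => g x - h x).
Proof.
move=> Sf Sg Sh; apply: le_trans (N_D (S_B Sf Sg) (S_B Sg Sh)).
by rewrite (@N_ext _ (fun x => (f x - g x) + (g x - h x))) // => x; rewrite addrA subrK.
Qed.

Lemma geom_bound (u : nat -> T -> R) (B : R) : (forall n, S (u n)) -> 0 <= B ->
  (forall n, N (fun x => u n.+1 x - u n x) <= B * w R n) ->
  forall m j, N (fun x => u (m + j)%N x - u m x) <= 2 * B * (w R m - w R (m + j)).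
Proof.
move=> Su B0 Hu m; elim=> [|j IH].
  rewrite addn0 subrr mulr0 (@N_ext _ (fun=> 0)) ?N_zero // => x.
  by rewrite subrr.
apply: (le_trans (N_tri (Su (m + j.+1)%N) (Su (m + j)%N) (Su m))).
rewrite addnS; have := Hu (m + j)%N; rewrite (wS R (m + j)) => H1.
move: IH; rewrite (wS R (m + j)) => IH.
have := w_ge0 R (m + j).+1; lra.
Qed.

Lemma geom_cauchy (u : nat -> T -> R) (B : R) : (forall n, S (u n)) -> 0 <= B ->
  (forall n, N (fun x => u n.+1 x - u n x) <= B * w R n) ->
  forall e : R, 0 < e -> exists M : nat, forall m n : nat,
        (M <= m)%N -> (M <= n)%N -> N (fun x => u m x - u n x) < e.
Proof.
move=> Su B0 Hu e e0.
have pos : 0 < 2 * B + 1 by lra.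
have [M HM] := @w_small R (e / (2 * B + 1)) (divr_gt0 e0 pos).
have key : forall m n, (M <= n)%N -> (n <= m)%N -> N (fun x => u m x - u n x) < e.
  move=> m n Mn nm; rewrite -(subnKC nm).
  apply: (le_lt_trans (geom_bound u B Su B0 Hu n (m - n))).
  have := HM M (leqnn M); rewrite ltr_pdivlMr //.
  have := w_anti R _ _ Mn; have := w_ge0 R (n + (m - n)); have := w_ge0 R n.
  have := w_ge0 R M; nra.
exists M => m n Mm Mn; case: (leqP n m) => nm; first exact: key.
by rewrite N_subC ?Su //; apply: key => //; exact: ltnW.
Qed.

End Basics.


Lemma meas_ge0 d (T : measurableType d) (R : realType) (h : T -> R) :
  measurable_fun setT h -> measurable [set x | 0 <= h x].
Proof.
move=> mh; have := mh measurableT _ (measurable_itv `[0, +oo[); rewrite setTI.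
congr measurable; apply/seteqP; split => x /=; by rewrite in_itv /= andbT.
Qed.

Section Dom.
Context d (T : measurableType d) (R : realType) (mu : {measure set T -> \bar R})
  (S : set (T -> R)) (N : (T -> R) -> R).
Hypotheses (HS : L0_subspace mu S) (HN : norm_on mu S N) (Hc : complete_on S N)
  (Hsub : subsequence_property mu S N).
Context (C : R).
Hypotheses (C0 : 0 < C) (HC : forall f (A : set T), S f -> measurable A ->
      S (fun x => \1_A x * f x) /\ N (fun x => \1_A x * f x) <= C * N f).

Lemma N_B {f g} : S f -> S g -> N (fun x => f x - g x) <= N f + N g.
Proof.
move=> Sf Sg; have := N_D HN Sf (S_N HS Sg); rewrite (N_opp HN) //.
Qed.

Lemma esg_bound g (A : set T) : S g -> measurable A ->
  S (fun x => (2 * \1_A x - 1) * g x) /\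
  N (fun x => (2 * \1_A x - 1) * g x) <= (2 * C + 1) * N g.
Proof.
move=> Sg mA; have [S1 N1] := HC g A Sg mA.
have E : (fun x => (2 * \1_A x - 1) * g x) =
         (fun x => (fun y => 2 * (\1_A y * g y)) x - g x).
  by apply/funext => x /=; rewrite mulrBl mulrA mul1r.
rewrite E; have S2 := S_Z HS 2 S1; split; first exact (S_B HS S2 Sg).
apply: (le_trans (N_B S2 Sg)); rewrite (N_Z HN) // ger0_norm //.
have := N_ge0 HS HN Sg; nra.
Qed.

Section Expansion.
Variables (g k : T -> R).
Hypotheses (Sg : S g) (mk : measurable_fun setT k) (dk : forall x, `|k x| <= `|g x|).

Fixpoint rr n : T -> R := if n is m.+1 then
  (fun x => 2 * rr m x - (2 * \1_[set y | 0 <= rr m y * g y] x - 1) * g x) else k.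

Definition esg n x : R := 2 * \1_[set y | 0 <= rr n y * g y] x - 1.

Lemma rrS n : rr n.+1 = fun x => 2 * rr n x - esg n x * g x.
Proof. by []. Qed.

Lemma rr_meas n : measurable_fun setT (rr n) /\ measurable [set y | 0 <= rr n y * g y].
Proof.
have mg := S_meas HS Sg.
elim: n => [|n [IH1 IH2]] /=.
  by split => //; apply: meas_ge0; exact: measurable_funM.
have m1 : measurable_fun setT (rr n.+1).
  apply: measurable_funB; first exact: measurable_funM.
  apply: measurable_funM => //; apply: measurable_funB => //.
  by apply: measurable_funM => //; exact: measurable_indic.
by split => //; apply: meas_ge0; exact: measurable_funM.
Qed.

Lemma rr_le n x : `|rr n x| <= `|g x|.
Proof.
elim: n => [|n IH] /=; first exact: dk.
rewrite indicE; case: (boolP (x \in _)) => /= xin.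
  move: xin; rewrite in_setE /= => H; rewrite mulr1.
  have -> : 2 * rr n x - (2 - 1) * g x = 2 * rr n x - g x by ring.
  exact: alg1.
move: xin; rewrite notin_setE /= => /negP; rewrite -ltNge => H; rewrite mulr0.
have -> : 2 * rr n x - (0 - 1) * g x = 2 * rr n x + g x by ring.
exact: alg2.
Qed.

Fixpoint ss n : T -> R := if n is m.+1 then (fun x => ss m x + w R m.+1 * esg m x)
  else (fun=> 0).

Lemma inv_eq n x : k x = ss n x * g x + w R n * rr n x.
Proof.
elim: n => [|n IH] /=; first by rewrite /w expr0; ring.
rewrite IH (wS R n) /esg; ring.
Qed.

Definition uu n := fun x => ss n x * g x.

Lemma uu_S n : S (uu n).
Proof.
elim: n => [|n IH].
  by apply: (S_ext (S_Z HS 0 Sg)) => x; rewrite /uu /= !mul0r.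
have [S1 _] := esg_bound g _ Sg (rr_meas n).2.
apply: (S_ext (S_D HS IH (S_Z HS (w R n.+1) S1))) => x.
rewrite /uu /= /esg; ring.
Qed.

Definition BB := (2 * C + 1) * N g.

Lemma BB_ge0 : 0 <= BB.
Proof. rewrite /BB; have H := N_ge0 HS HN Sg; have H2 := C0; apply: mulr_ge0 => //; lra. Qed.

Lemma uu_step n : N (fun x => uu n.+1 x - uu n x) <= BB * w R n.
Proof.
have [S1 N1] := esg_bound g _ Sg (rr_meas n).2.
rewrite (N_ext _ ((fun x => w R n.+1 * ((2 * \1_[set y | 0 <= rr n y * g y] x - 1) * g x)))); last first.
  by move=> x; rewrite /uu /= /esg; ring.
rewrite (N_Z HN) // ger0_norm ?w_ge0 // (wS R n).
move: N1; rewrite -/BB => N1; have := BB_ge0; have := w_ge0 R n.+1; nra.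
Qed.

Lemma uu_bound n : N (uu n) <= 2 * BB.
Proof.
have := geom_bound HS HN uu BB uu_S BB_ge0 uu_step 0 n.
rewrite add0n (N_ext _ (uu n)); last by move=> x; rewrite /uu /= mul0r subr0.
move=> H; apply: (le_trans H); have := w_ge0 R n; rewrite /w expr0.
have := BB_ge0; nra.
Qed.

Lemma uu_cvg x : forall phi : nat -> nat, {homo phi : m n / (m < n)%N >-> (m < n)%N} ->
  (uu (phi n) x) @[n --> \oo] --> k x.
Proof.
move=> phi Hp; apply/cvgrPdist_lt => e e0.
have pos : 0 < e / (`|g x| + 1) by apply: divr_gt0 => //; have := normr_ge0 (g x); lra.
have [M HM] := @w_small R _ pos.
exists M => // n /= Mn.
have Mp : (M <= phi n)%N by apply: leq_trans Mn (inc_ge phi Hp n).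
rewrite (inv_eq (phi n) x) /uu addrAC subrr add0r normrM ger0_norm ?w_ge0 //.
have := HM _ Mp; rewrite ltr_pdivlMr; last by have := normr_ge0 (g x); lra.
have := rr_le (phi n) x; have := w_ge0 R (phi n); have := normr_ge0 (g x); nra.
Qed.

Lemma dom_main : S k /\ N k <= 2 * BB.
Proof.
have Cau := geom_cauchy HS HN uu BB uu_S BB_ge0 uu_step.
have [F SF HF] := Hc uu uu_S Cau.
have [phi [Hp Hae]] := Hsub uu F uu_S SF HF.
have Fk : F = k %[ae mu].
  by apply: filterS Hae => x Hx _; exact: lim_uniq Hx (uu_cvg x phi Hp).
have Sk : S k := S_ae HS SF mk Fk.
split => //; rewrite -(N_ae HN SF Sk Fk).
apply: (le_of_cvg0 R _ _ _ _ HF) => n.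
rewrite (N_ext _ (fun x => uu n x + (F x - uu n x))); last first.
  by move=> x; rewrite addrC subrK.
apply: (le_trans (N_D HN (uu_S n) (S_B HS SF (uu_S n)))).
by rewrite (N_subC HS HN SF (uu_S n)); apply: lerD => //; exact: uu_bound.
Qed.
End Expansion.

Definition KK := 2 * (2 * C + 1).

Lemma KK_gt0 : 0 < KK.
Proof. rewrite /KK; have := C0; lra. Qed.

Lemma dom (g k : T -> R) : S g -> measurable_fun setT k -> (forall x, `|k x| <= `|g x|) ->
  S k /\ N k <= KK * N g.
Proof. by move=> Sg mk dk; have := dom_main g k Sg mk dk; rewrite /BB /KK mulrA. Qed.

Lemma domae (g k : T -> R) : S g -> measurable_fun setT k -> {ae mu, forall x, `|k x| <= `|g x|} ->
  S k /\ N k <= KK * N g.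
Proof.
move=> Sg mk H.
have mg := S_meas HS Sg.
pose D := [set x | 0 <= `|g x| - `|k x|].
have mD : measurable D.
  apply: meas_ge0; apply: measurable_funB.
    by apply: measurableT_comp => //; exact: normr_measurable.
  by apply: measurableT_comp => //; exact: normr_measurable.
pose k' := fun x => \1_D x * k x.
have mk' : measurable_fun setT k' by apply: measurable_funM => //; exact: measurable_indic.
have dk' : forall x, `|k' x| <= `|g x|.
  move=> x; rewrite /k' indicE; case: (boolP (x \in D)) => xD.
    by rewrite mul1r; move: xD; rewrite in_setE /D /= subr_ge0.
  by rewrite mul0r normr0.
have [Sk' Nk'] := dom g k' Sg mk' dk'.
have E1 : k' = k %[ae mu].
  apply: filterS H => x Hx _; rewrite /k' indicE.
  have -> : x \in D by rewrite in_setE /D /= subr_ge0.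
  by rewrite mul1r.
have Sk : S k := S_ae HS Sk' mk E1.
split => //; rewrite -(N_ae HN Sk' Sk E1) //.
Qed.

Definition Kset (f : T -> R) := [set y | exists k, [/\ S k, {ae mu, forall x, `|k x| <= `|f x|} & y = N k]].
Definition N' (f : T -> R) := sup (Kset f).

Lemma Kset_ne (f : T -> R) : S f -> Kset f !=set0.
Proof. by move=> Sf; exists (N f), f; split => //; apply: aeW => x. Qed.

Lemma Kset_ub (f : T -> R) : S f -> ubound (Kset f) (KK * N f).
Proof. by move=> Sf y [k [Sk Hk ->]]; exact: (domae f k Sf (S_meas HS Sk) Hk).2. Qed.

Lemma N'_ge (f k : T -> R) : S f -> S k -> {ae mu, forall x, `|k x| <= `|f x|} -> N k <= N' f.
Proof.
move=> Sf Sk Hk; apply: (ub_le_sup (E := Kset f)); first by exists (KK * N f); exact: Kset_ub.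
by exists k.
Qed.

Lemma N'_le (f : T -> R) b : S f -> (forall k, S k -> {ae mu, forall x, `|k x| <= `|f x|} -> N k <= b) ->
  N' f <= b.
Proof. by move=> Sf H; apply: ge_sup; [exact: Kset_ne | move=> y [k [Sk Hk ->]]; exact: H]. Qed.

Lemma N_le_N' (f : T -> R) : S f -> N f <= N' f.
Proof. by move=> Sf; apply: N'_ge => //; apply: aeW => x. Qed.

Lemma N'_le_K (f : T -> R) : S f -> N' f <= KK * N f.
Proof. by move=> Sf; apply: N'_le => // k Sk Hk; exact: (domae f k Sf (S_meas HS Sk) Hk).2. Qed.

Lemma N'_ge0 (f : T -> R) : S f -> 0 <= N' f.
Proof. by move=> Sf; apply: (le_trans (N_ge0 HS HN Sf)); exact: N_le_N'. Qed.

Lemma N'_ae (f g : T -> R) : S f -> S g -> f = g %[ae mu] -> N' f = N' g.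
Proof.
move=> Sf Sg fg; apply/eqP; rewrite eq_le; apply/andP; split.
  apply: N'_le => // k Sk Hk; apply: N'_ge => //.
  by apply: filterS2 Hk fg => x H1 H2; rewrite -H2.
apply: N'_le => // k Sk Hk; apply: N'_ge => //.
by apply: filterS2 Hk fg => x H1 H2; rewrite H2.
Qed.

Lemma N'_eq0 (f : T -> R) : S f -> (N' f = 0 <-> f = (fun=> 0) %[ae mu]).
Proof.
move=> Sf; split => H.
  apply/(N_eq0 HN Sf); apply/eqP; rewrite eq_le (N_ge0 HS HN Sf) andbT.
  by rewrite -H N_le_N'.
have H0 := (N_eq0 HN Sf).2 H.
apply/eqP; rewrite eq_le N'_ge0 // andbT.
by apply: (le_trans (N'_le_K f Sf)); rewrite H0 mulr0.
Qed.

Lemma N'_D (f g : T -> R) : S f -> S g -> N' (fun x => f x + g x) <= N' f + N' g.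
Proof.
move=> Sf Sg; apply: N'_le => [|k Sk Hk]; first exact: (S_D HS Sf Sg).
have mf := S_meas HS Sf; have mk := S_meas HS Sk.
pose k1 := fun x => Num.max (- `|f x|) (Num.min `|f x| (k x)).
have mk1 : measurable_fun setT k1.
  have mnf : measurable_fun setT (fun x => `|f x|).
    by apply: measurableT_comp => //; exact: normr_measurable.
  apply: (measurable_maxr (f := fun x => - `|f x|) (g := fun x => Num.min `|f x| (k x))).
    by apply: measurableT_comp => //.
  exact: (measurable_minr (f := fun x => `|f x|) (g := k)).
have dk1 : forall x, `|k1 x| <= `|f x|.
  move=> x; have := normr_ge0 (f x) => h0.
  rewrite /k1 minEle; case: (lerP `|f x| (k x)) => h1; rewrite maxEle;
    [case: (lerP (- `|f x|) `|f x|) | case: (lerP (- `|f x|) (k x))] => h2;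
    rewrite ler_norml; apply/andP; split; lra.
have Sk1 : S k1 := (dom f k1 Sf mk1 dk1).1.
have Sk2 : S (fun x => k x - k1 x) := S_B HS Sk Sk1.
rewrite (N_ext _ (fun x => k1 x + (k x - k1 x))); last by move=> x; rewrite addrC subrK.
apply: (le_trans (N_D HN Sk1 Sk2)); apply: lerD.
  by apply: N'_ge => //; apply: aeW.
apply: N'_ge => //; apply: filterS Hk => x Hx; exact: alg3.
Qed.

Lemma N'_Zle (a : R) (f : T -> R) : S f -> N' (fun x => a * f x) <= `|a| * N' f.
Proof.
move=> Sf; apply: N'_le => [|k Sk Hk]; first exact: (S_Z HS a Sf).
have [a0|a0] := eqVneq a 0.
  rewrite a0 normr0 mul0r; suff -> : N k = 0 by [].
  apply: (N_eq0 HN Sk).2; apply: filterS Hk => x Hx _.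
  move: Hx; rewrite a0 mul0r normr0 => Hx.
  by apply/eqP; rewrite -normr_eq0 eq_le normr_ge0 andbT.
have Sk' := S_Z HS a^-1 Sk.
rewrite (N_ext _ (fun x => a * (a^-1 * k x))); last by move=> x; rewrite mulVKf.
rewrite (N_Z HN) //; apply: ler_wpM2l => //; apply: N'_ge => //.
apply: filterS Hk => x Hx; rewrite normrM normrV ?unitfE //.
by rewrite ler_pdivrMl ?normr_gt0 // -normrM.
Qed.

Lemma N'_Z (a : R) (f : T -> R) : S f -> N' (fun x => a * f x) = `|a| * N' f.
Proof.
move=> Sf; apply/eqP; rewrite eq_le N'_Zle //=.
have [->|a0] := eqVneq a 0; first by rewrite normr0 mul0r N'_ge0 //; exact: (S_Z HS 0 Sf).
have Saf := S_Z HS a Sf.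
have := N'_Zle a^-1 _ Saf.
have -> : (fun x => a^-1 * (a * f x)) = f by apply/funext => x; rewrite mulKf.
rewrite normrV ?unitfE // => H.
by rewrite -ler_pdivlMl ?normr_gt0 // mulrC.
Qed.

Lemma N'_norm : norm_on mu S N'.
Proof.
split; [exact: N'_ae | exact: N'_eq0 | exact: N'_D | exact: N'_Z].
Qed.

Lemma N'_complete : complete_on S N'.
Proof.
move=> u Su Cau.
have CauN : forall e : R, 0 < e -> exists M : nat, forall m n : nat,
    (M <= m)%N -> (M <= n)%N -> N (fun x => u m x - u n x) < e.
  move=> e e0; have [M HM] := Cau e e0; exists M => m n Mm Mn.
  by apply: le_lt_trans (HM m n Mm Mn); apply: N_le_N'; exact: (S_B HS (Su m) (Su n)).
have [F SF HF] := Hc u Su CauN.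
exists F => //; apply: ev_cvg0 => e e0.
have [M HM] := @cvg0_ev R _ HF (e / KK) (divr_gt0 e0 KK_gt0).
exists M => n Mn; have SB := S_B HS (Su n) SF.
rewrite ger0_norm ?N'_ge0 //; apply: (le_lt_trans (N'_le_K _ SB)).
have := HM n Mn; rewrite ltr_pdivlMr ?KK_gt0 // => H.
have := ler_norm (N (fun x => u n x - F x)); have := KK_gt0; nra.
Qed.

Lemma N'_bfs : banach_function_space mu S N'.
Proof.
split.
- split => //; [exact: N'_norm | exact: N'_complete].
- by move=> f g mf Sg H; exact: (domae g f Sg mf H).1.
- move=> f g Sf Sg H; apply: N'_le => // k Sk Hk; apply: N'_ge => //.
  by apply: filterS2 Hk H => x; apply: le_trans.
Qed.

Lemma N'_equiv : equivalent_norms S N N'.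
Proof.
exists 1, KK; split => //; first exact: KK_gt0.
by move=> f Sf; rewrite mul1r; split; [exact: N_le_N' | exact: N'_le_K].
Qed.

End Dom.


Section Fwd.
Context d (T : measurableType d) (R : realType) (mu : {measure set T -> \bar R})
  (S : set (T -> R)) (N : (T -> R) -> R).
Hypotheses (HS : L0_subspace mu S) (HN : norm_on mu S N) (Hc : complete_on S N)
  (HI : L0_ideal mu S) (HL : lattice_norm mu S N).

Lemma bfs_subseq : subsequence_property mu S N.
Proof.
move=> u f Su Sf Hcv.
have Sd : forall n, S (fun x => u n x - f x) by move=> n; exact (S_B HS (Su n) Sf).
have H1 : forall k, exists M, forall n, (M <= n)%N -> N (fun x => u n x - f x) < w R k.
  move=> k; have [M HM] := @cvg0_ev R _ Hcv (w R k) (w_gt0 R k).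
  by exists M => n /HM; rewrite ger0_norm // (N_ge0 HS HN (Sd n)).
have [M HM] := boolp.choice H1.
pose phi := fix phi k := if k is j.+1 then maxn (phi j).+1 (M j.+1) else M 0.
have phi_inc : {homo phi : m n / (m < n)%N >-> (m < n)%N}.
  apply: homo_ltn; first by move=> y x z; exact: ltn_trans.
  by move=> i /=; exact: leq_maxl.
have phi_ge : forall k, (M k <= phi k)%N by case => [|k] //=; exact: leq_maxr.
exists phi; split => //.
pose v k := fun x => `|u (phi k) x - f x|.
have Sv : forall k, S (v k).
  move=> k; apply: (HI _ _ _ (Sd (phi k))).
    apply: measurableT_comp; first exact: normr_measurable.
    exact (S_meas HS (Sd (phi k))).
  by apply: aeW => x; rewrite /v normr_id.
have Nv : forall k, N (v k) <= w R k.
  move=> k; apply: (le_trans (HL _ _ (Sv k) (Sd (phi k)) _)).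
    by apply: aeW => x; rewrite /v normr_id.
  exact/ltW/HM.
pose G m := fun x => \sum_(0 <= i < m) v i x.
have GS : forall m x, G m.+1 x = G m x + v m x.
  by move=> m x; rewrite /G big_nat_recr.
have G0 : forall x, G 0 x = 0 by move=> x; rewrite /G big_geq.
have SG : forall m, S (G m).
  elim=> [|m IH]; first by apply: (S_ext (S_0 HS)) => x; rewrite G0.
  by apply: (S_ext (S_D HS IH (Sv m))) => x; rewrite GS.
have Gstep : forall n, N (fun x => G n.+1 x - G n x) <= 1 * w R n.
  move=> n; rewrite mul1r (N_ext _ (v n)); first exact: Nv.
  by move=> x; rewrite GS addrAC subrr add0r.
have Gmono : forall m j x, G m x <= G (m + j)%N x.
  move=> m; elim=> [|j IH] x; first by rewrite addn0.
  by rewrite addnS GS; apply: (le_trans (IH x)); rewrite lerDl /v normr_ge0.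
have Cau := geom_cauchy HS HN G 1 SG ler01 Gstep.
have [Gl SGl HGl] := Hc G SG Cau.
have pos : forall m, {ae mu, forall x, G m x <= Gl x}.
  move=> m.
  pose h := fun x => Num.max (G m x - Gl x) 0.
  have Sdm := S_B HS (SG m) SGl.
  have dh : forall x, `|h x| <= `|G m x - Gl x|.
    move=> x; rewrite /h maxEle; case: (lerP (G m x - Gl x) 0) => hx; rewrite ?normr0 ?normr_ge0 //.
  have Sh : S h.
    apply: (HI _ _ _ Sdm); last by apply: aeW; exact: dh.
    apply: (measurable_maxr (f := fun x => G m x - Gl x) (g := cst 0)).
      exact (S_meas HS Sdm).
    exact: measurable_cst.
  have Nh0 : N h <= 0.
    apply: (le_of_cvg0' R _ _ _ m _ HGl) => p mp; rewrite add0r.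
    apply: HL => //; first exact (S_B HS (SG p) SGl).
    apply: aeW => x; rewrite /h maxEle; case: (lerP (G m x - Gl x) 0) => hx; rewrite ?normr0 ?normr_ge0 //.
    have := Gmono m (p - m)%N x; rewrite subnKC // => hm.
    rewrite !ger0_norm; [lra | lra | lra].
  have : N h = 0 by apply/eqP; rewrite eq_le Nh0 (N_ge0 HS HN Sh).
  move/(N_eq0 HN Sh); apply: filterS => x /(_ I); rewrite /h maxEle.
  by case: lerP => hx H; [lra | move: hx; rewrite H ltxx].
have Hall := @ae_foralln _ _ _ mu _ pos.
apply: filterS Hall => x Hx.
have cv : (v i x) @[i --> \oo] --> 0.
  apply: cvg_series_cvg_0; apply: nondecreasing_is_cvgn.
    move=> a b ab; rewrite /series /=; have := Gmono a (b - a)%N x.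
    by rewrite subnKC.
  by exists (Gl x) => _ [m _ <-]; rewrite /series /=; exact: Hx.
apply/cvgrPdist_lt => e e0; have [K HK] := @cvg0_ev R _ cv e e0.
by exists K => // n /= Kn; rewrite distrC; have := HK n Kn; rewrite /v normr_id.
Qed.

End Fwd.


Theorem corollary4p2 (d : measure_display) (T : measurableType d) (R : realType)
  (mu : {measure set T -> \bar R}) (mu_fin : (mu [set: T] < +oo)%E)
  (S : set (T -> R)) (N : (T -> R) -> R) :
  banach_meas_space mu S N ->
  ((exists N' : (T -> R) -> R,
      norm_on mu S N' /\ equivalent_norms S N N' /\ banach_function_space mu S N')
   <-> (rectangular S N /\ subsequence_property mu S N)).
Proof.
case=> HS HN Hc; split.
- case=> N1 [HN1 [[c [C [c0 C0 Heq]]] [[_ _ Hc1] HI HL]]].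
  split.
  + exists (C / c); split; first exact: divr_gt0.
    move=> f A Sf mA.
    have mg : measurable_fun setT (fun x => \1_A x * f x).
      apply: measurable_funM; first exact: measurable_indic.
      exact: (S_meas HS Sf).
    have dm : forall x, `|\1_A x * f x| <= `|f x|.
      move=> x; rewrite indicE; case: (x \in A); rewrite ?mul1r ?mul0r ?normr0 //.
    have S1 := HI _ _ mg Sf (aeW _ dm).
    split => //.
    have [h1 _] := Heq _ S1; have [_ h2] := Heq _ Sf.
    have h3 := HL _ _ S1 Sf (aeW _ dm).
    rewrite mulrAC ler_pdivlMr //; lra.
  + move=> u f Su Sf HF.
    apply: (bfs_subseq _ _ _ _ _ _ HS HN1 Hc1 HI HL u f Su Sf).
    apply: ev_cvg0 => e e0.
    have [M HM] := @cvg0_ev R _ HF (e / C) (divr_gt0 e0 C0).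
    exists M => n Mn; have SB := S_B HS (Su n) Sf.
    have [_ h2] := Heq _ SB.
    rewrite ger0_norm ?(N_ge0 HS HN1 SB) //.
    have := HM n Mn; rewrite ltr_pdivlMr // => H.
    have := ler_norm (N (fun x => u n x - f x)); nra.
- case=> [[C [C0 HC]] Hsub].
  exists (N' _ _ _ mu S N); split; first exact: (N'_norm _ _ _ _ _ _ HS HN Hc Hsub _ C0 HC).
  split; first exact: (N'_equiv _ _ _ _ _ _ HS HN Hc Hsub _ C0 HC).
  exact: (N'_bfs _ _ _ _ _ _ HS HN Hc Hsub _ C0 HC).
Qed.
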